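(* Suppose monotone treatment response and monotone treatment selection hold. Then under Design 1, for all $x\in\mathcal X$, $\Gamma(x,p_0)\le\Gamma(x,0)$.
   Context: Population variables: $Y^*\in\{0,1\}$ (outcome), $T^*\in\{0,1\}$ (treatment), $X^*$ (covariate vector); potential outcomes $Y^*(1),Y^*(0)\in\{0,1\}$ satisfy $Y^*=T^*Y^*(1)+(1-T^* )Y^*(0)$; $p_0:=\Pr(Y^*=1)$. The observed vector $(Y,T,X)$ arises from Bernoulli sampling: $Y\in\{0,1\}$ is drawn with known probability $h_0:=\Pr(Y=1)\in(0,1)$, and given $Y=y$, $(T,X)$ is drawn from a distribution $\mathcal P_y$. Design 1 (case-control): for all $t\in\{0,1\}$, $x\in\mathcal X$, $y\in\{0,1\}$, $f_{X|Y}(x\mid y)=f_{X^*|Y^*}(x\mid y)$ and $\Pr(T=t\mid X=x,Y=y)=\Pr(T^*=t\mid X^*=x,Y^*=y)$, where $f$ denotes densities (or mass functions). Standing common support assumption: the support of $X^*$ and that of $X$ given $Y=y$ for $y=0,1$ coincide; call it $\mathcal X$. Let $\Pi(t\mid y,x):=\Pr(T=t\mid Y=y,X=x)$, assumed nonzero for all $t,y$. For $p\in[0,1]$, $r(x,p):=\frac{p(1-h_0)\Pr(Y=1\mid X=x)}{p(1-h_0)\Pr(Y=1\mid X=x)+h_0(1-p)\Pr(Y=0\mid X=x)}$ and $\Gamma(x,p):=\frac{\Pi(1\mid 1,x)}{\Pi(0\mid 1,x)}\cdot\frac{\Pi(0\mid 0,x)+r(x,p)\{\Pi(0\mid 1,x)-\Pi(0\mid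 0,x)\}}{\Pi(1\mid 0,x)+r(x,p)\{\Pi(1\mid 1,x)-\Pi(1\mid 0,x)\}}$. Monotone treatment response: $Y^*(1)\ge Y^*(0)$ almost surely. Monotone treatment selection: for all $t\in\{0,1\}$, $x\in\mathcal X$, $\Pr\{Y^*(t)=1\mid T^*=1,X^*=x\}\ge\Pr\{Y^*(t)=1\mid T^*=0,X^*=x\}$. *)

(* Defs.v *)
From HB Require Import structures.
From mathcomp Require Import all_boot all_order all_algebra.
From mathcomp Require Import all_classical all_reals all_analysis.
Set Implicit Arguments.
Unset Strict Implicit.
Unset Printing Implicit Defensive.
Import Order.TTheory GRing.Theory Num.Theory.
Local Open Scope ring_scope.

(* A population "type of unit": (Y*(0), Y*(1), T* ). *)
Definition utype := (bool * bool * bool)%type.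
Definition y0 (w : utype) : bool := w.1.1.
Definition y1 (w : utype) : bool := w.1.2.
Definition tr (w : utype) : bool := w.2.
Definition ypot (t : bool) (w : utype) : bool := if t then y1 w else y0 w.
Definition ystar (w : utype) : bool := ypot (tr w) w.

Section Defs.
Context {R : realType} {d : measure_display} {T : measurableType d}.

(* The joint law of (Y*(0),Y*(1),T*,X* ) is  fX(x) q(x,w) mu(dx):
   fX is the density of X* w.r.t. the reference measure mu and
   q x is the conditional p.m.f. of (Y*(0),Y*(1),T* ) given X* = x. *)

Definition cprob (q : T -> utype -> R) (x : T) (A : pred utype) : R :=
  \sum_(w : utype | A w) q x w.

Definition ccprob (q : T -> utype -> R) (x : T) (A B : pred utype) : R :=
  cprob q x [pred w | A w && B w] / cprob q x B.

Definition PrYs_X (q : T -> utype -> R) (y : bool) (x : T) : R :=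
  cprob q x [pred w | ystar w == y].

Definition p0 (mu : {measure set T -> \bar R}) (fX : T -> R)
  (q : T -> utype -> R) : R :=
  fine (\int[mu]_x (fX x * PrYs_X q true x)%:E).

Definition PrYs (mu : {measure set T -> \bar R}) (fX : T -> R)
  (q : T -> utype -> R) (y : bool) : R :=
  if y then p0 mu fX q else 1 - p0 mu fX q.

Definition fXs_Ys (mu : {measure set T -> \bar R}) (fX : T -> R)
  (q : T -> utype -> R) (y : bool) (x : T) : R :=
  fX x * PrYs_X q y x / PrYs mu fX q y.

Definition PiStar (q : T -> utype -> R) (t y : bool) (x : T) : R :=
  ccprob q x [pred w | tr w == t] [pred w | ystar w == y].

(* Observed data: Pr(Y=1) = h0, fXY y = f_{X|Y}(. | y),
   Pi t y x = Pi(t | y, x) = Pr(T = t | Y = y, X = x).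
   Pr(Y = 1 | X = x) by Bayes' rule: *)
Definition PrY1_X (h0 : R) (fXY : bool -> T -> R) (x : T) : R :=
  h0 * fXY true x / (h0 * fXY true x + (1 - h0) * fXY false x).

Definition r (h0 : R) (fXY : bool -> T -> R) (x : T) (p : R) : R :=
  p * (1 - h0) * PrY1_X h0 fXY x /
  (p * (1 - h0) * PrY1_X h0 fXY x + h0 * (1 - p) * (1 - PrY1_X h0 fXY x)).

Definition Gamma (h0 : R) (fXY : bool -> T -> R) (Pi : bool -> bool -> T -> R)
  (x : T) (p : R) : R :=
  Pi true true x / Pi false true x *
  ((Pi false false x + r h0 fXY x p * (Pi false true x - Pi false false x)) /
   (Pi true false x + r h0 fXY x p * (Pi true true x - Pi true false x))).

(* Monotone treatment response: Y*(1) >= Y*(0) (conditionally on X* = x,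
   for every x in the support S). *)
Definition MTR (q : T -> utype -> R) (S : set T) : Prop :=
  forall x, S x -> cprob q x [pred w | y0 w && ~~ y1 w] = 0.

Definition MTS (q : T -> utype -> R) (S : set T) : Prop :=
  forall (t : bool) x, S x ->
    ccprob q x [pred w | ypot t w] [pred w | tr w]
    >= ccprob q x [pred w | ypot t w] [pred w | ~~ tr w].

Definition design1 (mu : {measure set T -> \bar R}) (fX : T -> R)
  (q : T -> utype -> R) (S : set T) (fXY : bool -> T -> R)
  (Pi : bool -> bool -> T -> R) : Prop :=
  forall (t y : bool) x, S x ->
    fXY y x = fXs_Ys mu fX q y x /\ Pi t y x = PiStar q t y x.

End Defs.

(* Main.v *)
Require Import Defs.
From HB Require Import structures.
From mathcomp Require Import all_boot all_order all_algebra.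
From mathcomp Require Import all_classical all_reals all_analysis.
From mathcomp Require Import ring lra.
Import Order.TTheory GRing.Theory Num.Theory.
Local Open Scope ring_scope.

Lemma sum_utype (R : realType) (F : utype -> R) : \sum_(w : utype) F w =
  F (false,false,false) + F (false,false,true) + F (false,true,false) + F (false,true,true)
 + F (true,false,false) + F (true,false,true) + F (true,true,false) + F (true,true,true).
Proof.
rewrite (eq_bigr (fun p => F (p.1, p.2))); last by case.
rewrite -(pair_bigA _ (fun ab c => F (ab,c))) /=.
rewrite (eq_bigr (fun p => \sum_c F (p.1, p.2, c))); last by case.
rewrite -(pair_bigA _ (fun a b => \sum_c F (a,b,c))) /= !big_bool /=.
lra.
Qed.

Lemma r_alg (R : realFieldType) (h0 F P a : R) : 0 < h0 -> h0 < 1 -> 0 < F -> 0 < P -> P < 1 -> 0 < a -> a < 1 ->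
 P*(1-h0)*(h0*(F*a/P) / (h0*(F*a/P) + (1-h0)*(F*(1-a)/(1-P))))/(P*(1-h0)*(h0*(F*a/P) / (h0*(F*a/P) + (1-h0)*(F*(1-a)/(1-P)))) + h0*(1-P)*(1-(h0*(F*a/P) / (h0*(F*a/P) + (1-h0)*(F*(1-a)/(1-P)))))) = a.
Proof.
move=> h1 h2 F0 P1 P2 a1 a2.
have u0 : 0 < F*a/P by rewrite divr_gt0 // mulr_gt0.
have v0 : 0 < F*(1-a)/(1-P) by rewrite divr_gt0 ?mulr_gt0 ?subr_gt0.
have Pu : P * (F*a/P) = F * a by field; lra.
have Pv : (1-P) * (F*(1-a)/(1-P)) = F * (1-a) by field; lra.
move: u0 v0 Pu Pv.
generalize (F*a/P) (F*(1-a)/(1-P)) => u v u0 v0 Pu Pv.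
have D0 : 0 < h0 * u + (1-h0) * v by rewrite addr_gt0 ?mulr_gt0 ?subr_gt0.
have prE : 1 - h0 * u / (h0 * u + (1-h0) * v) = (1-h0)*v / (h0 * u + (1-h0) * v).
  by field; lra.
rewrite prE.
have -> : P * (1 - h0) * (h0 * u / (h0 * u + (1 - h0) * v)) = (P*(1-h0)*h0*u) / (h0 * u + (1-h0) * v).
  by rewrite !mulrA.
have -> : h0 * (1 - P) * ((1 - h0) * v / (h0 * u + (1 - h0) * v)) = (h0 * (1 - P)*(1 - h0) * v) / (h0 * u + (1-h0) * v).
  by rewrite !mulrA.
rewrite -mulrDl.
have -> : P * (1 - h0) * h0 * u = (1-h0)*h0 * (P * u) by ring.
have -> : h0 * (1 - P) * (1 - h0) * v = (1-h0)*h0 * ((1-P) * v) by ring.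
rewrite Pu Pv.
have : 0 < (1 - h0) * h0 * F by rewrite !mulr_gt0 // subr_gt0.
move=> K.
field.
apply/andP; split; lra.
Qed.

Lemma fin_alg (R : realFieldType) (c0 c1 c2 c3 c6 c7 a : R) :
  0 <= c0 -> 0 <= c1 -> 0 <= c2 -> 0 <= c3 -> 0 <= c6 -> 0 <= c7 ->
  0 < c3 + c7 -> 0 < c6 -> 0 < c1 -> 0 < c0 + c2 ->
  c0 + c1 + c2 + c3 + c6 + c7 = 1 ->
  (c2 + c6) / (c0 + c2 + c6) <= (c3 + c7) / (c1 + c3 + c7) ->
  a = c3 + c6 + c7 ->
  (c3+c7)/a/(c6/a) * (((c0+c2)/(1-a) + a*(c6/a - (c0+c2)/(1-a))) /
     (c1/(1-a) + a*((c3+c7)/a - c1/(1-a)))) <=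
  (c3+c7)/a/(c6/a) * ((c0+c2)/(1-a) / (c1/(1-a))).
Proof.
move=> g0 g1 g2 g3 g6 g7 p11 p01 p10 p00 s1 mts aE.
have a0 : 0 < a by rewrite aE; lra.
have b0 : 0 < 1 - a by rewrite aE; lra.
apply: ler_wpM2l.
  by repeat apply: divr_ge0; lra.
have -> : (c0+c2)/(1-a) + a*(c6/a - (c0+c2)/(1-a)) = c0 + c2 + c6.
  by field; rewrite !lt0r_neq0.
have -> : c1/(1-a) + a*((c3+c7)/a - c1/(1-a)) = c1 + c3 + c7.
  by field; rewrite !lt0r_neq0.
have -> : (c0+c2)/(1-a) / (c1/(1-a)) = (c0 + c2) / c1.
  by field; rewrite !lt0r_neq0.
have q1 : 0 < c0 + c2 + c6 by lra.
have q2 : 0 < c1 + c3 + c7 by lra.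
move: mts; rewrite ler_pdivrMr // mulrAC ler_pdivlMr // => mts.
rewrite ler_pdivrMr // mulrAC ler_pdivlMr //.
have : 0 <= c1 * c2 by rewrite mulr_ge0.
have : 0 <= (c3 + c7) * c2 by rewrite mulr_ge0 // ltW.
nra.
Qed.

Lemma cprobE (R : realType) (d : measure_display) (T : measurableType d)
  (q : T -> utype -> R) x (A : pred utype) : cprob q x A =
  (if A (false,false,false) then q x (false,false,false) else 0) +
  (if A (false,false,true) then q x (false,false,true) else 0) +
  (if A (false,true,false) then q x (false,true,false) else 0) +
  (if A (false,true,true) then q x (false,true,true) else 0) +
  (if A (true,false,false) then q x (true,false,false) else 0) +
  (if A (true,false,true) then q x (true,false,true) else 0) +
  (if A (true,true,false) then q x (true,true,false) else 0) +
  (if A (true,true,true) then q x (true,true,true) else 0).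
Proof. by rewrite /cprob big_mkcond sum_utype. Qed.

Theorem lemmaA6 (R : realType) (d : measure_display) (T : measurableType d)
  (mu : {measure set T -> \bar R})
  (fX : T -> R) (q : T -> utype -> R)
  (h0 : R) (fXY : bool -> T -> R) (Pi : bool -> bool -> T -> R)
  (S : set T)
  (fX_meas : measurable_fun setT fX)
  (fX_ge0 : forall x, 0 <= fX x)
  (fX_int : (\int[mu]_x (fX x)%:E = 1)%E)
  (q_meas : forall w, measurable_fun setT (fun x => q x w))
  (q_ge0 : forall x w, 0 <= q x w)
  (q_sum1 : forall x, \sum_(w : utype) q x w = 1)
  (h0_gt0 : 0 < h0) (h0_lt1 : h0 < 1)
  (fXY_ge0 : forall y x, 0 <= fXY y x)
  (supp_Xs : forall x, 0 < fX x <-> S x)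
  (supp_X : forall y x, 0 < fXY y x <-> S x)
  (Pi_neq0 : forall t y x, S x -> Pi t y x != 0)
  (Hdesign : design1 mu fX q S fXY Pi)
  (Hmtr : MTR q S) (Hmts : MTS q S) :
  forall x, S x -> Gamma h0 fXY Pi x (p0 mu fX q) <= Gamma h0 fXY Pi x 0.
Proof.
move=> x Sx.
have Fpos : 0 < fX x by apply/supp_Xs.
have fy1pos : 0 < fXY true x by apply/supp_X.
have fy0pos : 0 < fXY false x by apply/supp_X.
have [fy1E _] := Hdesign true true x Sx.
have [fy0E _] := Hdesign true false x Sx.
have [_ P11] := Hdesign true true x Sx.
have [_ P01] := Hdesign false true x Sx.
have [_ P10] := Hdesign true false x Sx.
have [_ P00] := Hdesign false false x Sx.
have n11 := Pi_neq0 true true x Sx.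
have n01 := Pi_neq0 false true x Sx.
have n10 := Pi_neq0 true false x Sx.
have n00 := Pi_neq0 false false x Sx.
have mtr := Hmtr x Sx.
have mts := Hmts true x Sx.
have s1 := q_sum1 x.
rewrite sum_utype in s1.
move: fy1E fy0E P11 P01 P10 P00 mtr mts.
rewrite /fXs_Ys /PrYs /PiStar /PrYs_X /ccprob !cprobE /=.
rewrite /Gamma /r.
have := q_ge0 x (false,false,false).
have := q_ge0 x (false,false,true).
have := q_ge0 x (false,true,false).
have := q_ge0 x (false,true,true).
have := q_ge0 x (true,false,false).
have := q_ge0 x (true,false,true).
have := q_ge0 x (true,true,false).
have := q_ge0 x (true,true,true).
move: s1.
generalize (q x (false,false,false)) (q x (false,false,true)) (q x (false,true,false)) (q x (false,true,true))
 (q x (true,false,false)) (q x (true,false,true)) (q x (true,true,false)) (q x (true,true,true)) => c0 c1 c2 c3 c4 c5 c6 c7.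
rewrite !add0r !addr0.
move=> s1 g7 g6 g5 g4 g3 g2 g1 g0 fy1E fy0E P11 P01 P10 P00 mtr mts.
rewrite P11 P01 P10 P00.

have c4E : c4 = 0 by lra.
have c5E : c5 = 0 by lra.
subst c4 c5.
rewrite ?addr0 ?add0r in fy1E fy0E P11 P01 P10 P00 mts s1 *.
have ne11 : c3 + c7 != 0 by apply: contra n11 => /eqP E; rewrite P11 E mul0r.
have ne01 : c6 != 0 by apply: contra n01 => /eqP E; rewrite P01 E mul0r.
have ne10 : c1 != 0 by apply: contra n10 => /eqP E; rewrite P10 E mul0r.
have ne00 : c0 + c2 != 0 by apply: contra n00 => /eqP E; rewrite P00 E mul0r.
have p11 : 0 < c3 + c7 by rewrite lt0r ne11 /=; lra.
have p01 : 0 < c6 by rewrite lt0r ne01 /=; lra.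
have p10 : 0 < c1 by rewrite lt0r ne10 /=; lra.
have p00 : 0 < c0 + c2 by rewrite lt0r ne00 /=; lra.
set P := p0 mu fX q in fy1E fy0E *.
have Ppos : 0 < P.
  have := fy1pos; rewrite fy1E; set Z := fX x * _.
  have Zpos : 0 < Z by rewrite /Z; apply: mulr_gt0 => //; lra.
  case: (ltrgtP 0 P) => // [Pneg|<-]; last by rewrite invr0 mulr0 ltxx.
  move=> H; have : Z / P < 0 by rewrite (pmulr_rlt0 _ Zpos) invr_lt0.
  lra.
have Plt1 : 0 < 1 - P.
  have := fy0pos; rewrite fy0E; set Z := fX x * _.
  have Zpos : 0 < Z by rewrite /Z; apply: mulr_gt0 => //; lra.
  case: (ltrgtP 0 (1 - P)) => // [Pneg|<-]; last by rewrite invr0 mulr0 ltxx.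
  move=> H; have : Z / (1 - P) < 0 by rewrite (pmulr_rlt0 _ Zpos) invr_lt0.
  lra.
have bE : c0 + c1 + c2 = 1 - (c3 + c6 + c7) by lra.
rewrite bE in fy0E *.
rewrite /PrY1_X fy1E fy0E r_alg //; try lra.
rewrite !mul0r !addr0.
apply: fin_alg => //; lra.
Qed.
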